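(* Let $\phi$ be an orientation-preserving isometry of a spin, closed, hyperbolic $4$-manifold $M=\Gamma\backslash H^4$, and let $\hat\phi$ be a lift of $\phi$ to a symmetry of a spin structure $\hat\Gamma\backslash\mathrm{SU}(1,1;\mathbb H)$ on $M$. Let $f\in\mathrm{SO}^+(4,1)$ be such that $\phi=f_\star$, and let $\hat f\in\mathrm{SU}(1,1;\mathbb H)$ be the lift of $f$ such that $\hat\phi=\hat f_\star$. Let $P$ be an isolated fixed point of $\phi$, and let $x\in H^4$ with $\Gamma x=P$. Let $g\in\mathrm{SO}^+(4,1)$ with $ge_5=x$, and let $\hat g\in\mathrm{SU}(1,1;\mathbb H)$ be a lift of $g$. Let $\gamma$ be the unique element of $\Gamma$ such that $\gamma fx=x$, and let $\hat\gamma$ be the unique element of $\hat\Gamma$ lifting $\gamma$. Then $\hat g^{-1}\hat\gamma\hat f\hat g=\mathrm{diag}(p,q)$ with $p$ and $q$ unit quaternions, and $$\nu(\hat\phi,P)=\frac{1}{2(\mathrm{Re}(p)-\mathrm{Re}(q))}.$$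
   Context: $\mathrm{SU}(1,1;\mathbb H)=\{A\in\mathbb H(2):A^*JA=J\}$, $J=\mathrm{diag}(1,-1)$, acts on $B^4=\{q\in\mathbb H:|q|<1\}$ by $\begin{pmatrix}a&b\\c&d\end{pmatrix}\cdot q=(aq+b)(cq+d)^{-1}$. Identify $q_0+q_1\mathbf i+q_2\mathbf j+q_3\mathbf k$ with $(q_0,\dots,q_3)\in\mathbb R^4$, let $H^4=\{x\in\mathbb R^5: x_1^2+\dots+x_4^2-x_5^2=-1,\ x_5>0\}$ and $\zeta:B^4\to H^4$, $\zeta(y)=(2y/(1-|y|^2),(1+|y|^2)/(1-|y|^2))$. The double covering epimorphism $\eta:\mathrm{SU}(1,1;\mathbb H)\to\mathrm{SO}^+(4,1)$ (representing $\mathrm{Spin}^+(4,1)$) is characterized by $\zeta(A\cdot y)=\eta(A)\zeta(y)$. $\Gamma\subset\mathrm{SO}^+(4,1)$ is discrete and torsion-free with $M$ closed, and $\hat\Gamma\subset\mathrm{SU}(1,1;\mathbb H)$ maps isomorphically onto $\Gamma$ under $\eta$. Isometries $f_\star(\Gamma x)=\Gamma fx$ ($f$ normalizing $\Gamma$) and symmetries $\hat f_\star(\hat\Gamma\hat h)=\hat\Gamma\hat f\hat h$ ($\hat f$ normalizing $\hat\Gamma$). $\mathrm{Spin}(4)=\eta^{-1}(\mathrm{Stab}(e_5))=\{\mathrm{diag}(p,q):|p|=|q|=1\}$, with half-spin representations (Atiyah–Bott convention) $\Delta_4^+(\mathrm{diag}(p,q))=\Psi_1(p)$, $\Delta_4^-(\mathrm{diag}(p,q))=\Psi_1(q)$,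 where $\Psi_1(a+b\mathbf j)=\begin{pmatrix}a&b\\-\overline b&\overline a\end{pmatrix}$ for $a,b\in\mathbb C$. For an isolated fixed point $P=\Gamma ge_5$ of $\phi=\hat f_\star$-projection, there is a unique $s\in\mathrm{Spin}(4)$ with $\hat\Gamma\hat f\hat g=\hat\Gamma\hat gs$, and the local contribution of $P$ to the Atiyah–Singer $G$-spin formula is $\nu(\hat\phi,P)=\dfrac{\mathrm{tr}\,\Delta_4^+(s)-\mathrm{tr}\,\Delta_4^-(s)}{|\det(I-d\phi_P)|}$, with $d\phi_P$ the differential of $\phi$ at $P$. *)

(* Defs.v *)
From HB Require Import structures.
From mathcomp Require Import all_boot all_order all_algebra.
From mathcomp Require Import reals.
From mathcomp Require Import complex.
Set Implicit Arguments. Unset Strict Implicit. Unset Printing Implicit Defensive.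
Import Order.TTheory GRing.Theory Num.Theory.
Local Open Scope ring_scope.

Section Defs.
Variable R : realType.

Record quat := Quat { q0 : R; q1 : R; q2 : R; q3 : R }.

Definition qzero : quat := Quat 0 0 0 0.
Definition qone : quat := Quat 1 0 0 0.
Definition qadd (a b : quat) : quat :=
  Quat (q0 a + q0 b) (q1 a + q1 b) (q2 a + q2 b) (q3 a + q3 b).
Definition qopp (a : quat) : quat := Quat (- q0 a) (- q1 a) (- q2 a) (- q3 a).
Definition qmul (a b : quat) : quat :=
  Quat (q0 a * q0 b - q1 a * q1 b - q2 a * q2 b - q3 a * q3 b)
       (q0 a * q1 b + q1 a * q0 b + q2 a * q3 b - q3 a * q2 b)
       (q0 a * q2 b - q1 a * q3 b + q2 a * q0 b + q3 a * q1 b)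
       (q0 a * q3 b + q1 a * q2 b - q2 a * q1 b + q3 a * q0 b).
Definition qconj (a : quat) : quat := Quat (q0 a) (- q1 a) (- q2 a) (- q3 a).
Definition qnorm2 (a : quat) : R := q0 a ^+ 2 + q1 a ^+ 2 + q2 a ^+ 2 + q3 a ^+ 2.
Definition qinv (a : quat) : quat :=
  let n := qnorm2 a in Quat (q0 a / n) (- q1 a / n) (- q2 a / n) (- q3 a / n).
Definition qre (a : quat) : R := q0 a.

Record hmat := HMat { h00 : quat; h01 : quat; h10 : quat; h11 : quat }.

Definition hmul (A B : hmat) : hmat :=
  HMat (qadd (qmul (h00 A) (h00 B)) (qmul (h01 A) (h10 B)))
       (qadd (qmul (h00 A) (h01 B)) (qmul (h01 A) (h11 B)))
       (qadd (qmul (h10 A) (h00 B)) (qmul (h11 A) (h10 B)))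
       (qadd (qmul (h10 A) (h01 B)) (qmul (h11 A) (h11 B))).
Definition hstar (A : hmat) : hmat :=
  HMat (qconj (h00 A)) (qconj (h10 A)) (qconj (h01 A)) (qconj (h11 A)).
Definition hdiag (p q : quat) : hmat := HMat p qzero qzero q.
Definition hone : hmat := hdiag qone qone.
Definition hJ : hmat := hdiag qone (qopp qone).

Definition SU11H (A : hmat) : Prop := hmul (hstar A) (hmul hJ A) = hJ.

(* Inverse of an element of SU(1,1;H): A^{-1} = J A^* J
   (from A^* J A = J one gets (J A^* J) A = 1). *)
Definition hinv (A : hmat) : hmat := hmul hJ (hmul (hstar A) hJ).

(* Moebius action on B^4: A . q = (a q + b)(c q + d)^{-1} *)
Definition hact (A : hmat) (y : quat) : quat :=
  qmul (qadd (qmul (h00 A) y) (h01 A)) (qinv (qadd (qmul (h10 A) y) (h11 A))).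

Definition qcoord (y : quat) (i : 'I_4) : R :=
  match nat_of_ord i with 0 => q0 y | 1 => q1 y | 2 => q2 y | _ => q3 y end.

Definition zeta (y : quat) : 'cV[R]_5 :=
  let n := qnorm2 y in
  \col_(i < 5)
    (if (i < 4)%N as b return ((i < 4)%N = b -> R) then
       fun h => 2 * qcoord y (Ordinal h) / (1 - n)
     else fun _ => (1 + n) / (1 - n)) erefl.

Definition J5 : 'M[R]_5 := \matrix_(i, j) (if i == j then (if (i < 4)%N then 1 else -1) else 0).
Definition e5 : 'cV[R]_5 := \col_(i < 5) (if (i == 4 :> nat) then 1 else 0).
Definition i4 : 'I_5 := inord 4.

Definition inH4 (x : 'cV[R]_5) : Prop :=
  (x^T *m J5 *m x) 0 0 = -1 /\ 0 < x i4 0.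

Definition SOp41 (A : 'M[R]_5) : Prop :=
  A^T *m J5 *m A = J5 /\ \det A = 1 /\ 0 < A i4 i4.

Definition eta_of (A : hmat) (E : 'M[R]_5) : Prop :=
  forall y : quat, qnorm2 y < 1 -> zeta (hact A y) = E *m zeta y.

Definition is_subgroup5 (G : 'M[R]_5 -> Prop) : Prop :=
  G 1 /\ (forall A B, G A -> G B -> G (A *m B)) /\
  (forall A, G A -> G (invmx A)).

Definition discrete5 (G : 'M[R]_5 -> Prop) : Prop :=
  forall A, G A -> exists2 eps : R, 0 < eps &
    forall B, G B -> (forall i j, `|B i j - A i j| < eps) -> B = A.

Definition torsion_free5 (G : 'M[R]_5 -> Prop) : Prop :=
  forall A, G A -> forall n : nat, (0 < n)%N -> A ^+ n = 1 -> A = 1.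

(* Gamma \ H^4 is compact: some bounded set of H^4 meets every Gamma-orbit *)
Definition cocompact5 (G : 'M[R]_5 -> Prop) : Prop :=
  exists C : R, forall x, inH4 x -> exists2 A, G A & forall i, `|(A *m x) i 0| <= C.

Definition is_subgroupH (G : hmat -> Prop) : Prop :=
  G hone /\ (forall A B, G A -> G B -> G (hmul A B)) /\
  (forall A, G A -> G (hinv A)).

Definition normalizes5 (f : 'M[R]_5) (G : 'M[R]_5 -> Prop) : Prop :=
  forall A, G A <-> G (f *m A *m invmx f).

Definition normalizesH (f : hmat) (G : hmat -> Prop) : Prop :=
  forall A, G A <-> G (hmul f (hmul A (hinv f))).

Definition Spin4 (s : hmat) : Prop :=
  h01 s = qzero /\ h10 s = qzero /\ qnorm2 (h00 s) = 1 /\ qnorm2 (h11 s) = 1.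

Definition Psi1 (x : quat) : 'M[R[i]]_2 :=
  let a := Complex (q0 x) (q1 x) in
  let b := Complex (q2 x) (q3 x) in
  \matrix_(i < 2, j < 2)
    (if (i == 0 :> nat) then (if (j == 0 :> nat) then a else b)
     else (if (j == 0 :> nat) then - conjc b else conjc a)).

Definition Delta4p (s : hmat) : 'M[R[i]]_2 := Psi1 (h00 s).
Definition Delta4m (s : hmat) : 'M[R[i]]_2 := Psi1 (h11 s).

(* Matrix of the differential d(phi)_P, P = Gamma x, x = g e5: phi lifts near x
   to the isometry L = gamma f of H^4 fixing x; its differential is L restricted
   to T_x H^4 = g (span(e1..e4)), written in the frame (g e1, ..., g e4),
   i.e. the upper-left 4x4 block of g^{-1} L g. *)
Definition dphi_mx (g L : 'M[R]_5) : 'M[R]_4 :=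
  let D := invmx g *m L *m g in \matrix_(i < 4, j < 4) D (widen_ord (leqnSn 4) i) (widen_ord (leqnSn 4) j).

(* local contribution nu(hat phi, P), given the s in Spin(4) with
   hat Gamma hat f hat g = hat Gamma hat g s *)
Definition nu_contrib (s : hmat) (g L : 'M[R]_5) : R[i] :=
  (\tr (Delta4p s) - \tr (Delta4m s)) / ((`|\det (1%:M - dphi_mx g L)|)%:C)%C.

End Defs.

(* Main.v *)
Require Import Defs.
From HB Require Import structures.
From mathcomp Require Import all_boot all_order all_algebra.
From mathcomp Require Import reals complex.
From mathcomp Require Import ring lra.
Import Order.TTheory GRing.Theory Num.Theory.
Local Open Scope ring_scope.
Set Implicit Arguments. Unset Strict Implicit.

Ltac qdestr := repeat match goal with
  | q : quat _ |- _ => destruct q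
  | A : hmat _ |- _ => destruct A end.
Ltac qunf := rewrite /hinv /qinv /hmul /hstar /hdiag /hone /hJ /qmul /qadd /qopp /qconj /qone /qzero /qnorm2 /=.
Ltac qsolve := qdestr; qunf; (congr HMat; congr Quat; ring) || (congr Quat; ring) || ring.

Lemma qmulA (R : realType) (a b c : quat R) : qmul a (qmul b c) = qmul (qmul a b) c.
Proof. qsolve. Qed.
Lemma qmulDl (R : realType) (a b c : quat R) : qmul (qadd a b) c = qadd (qmul a c) (qmul b c).
Proof. qsolve. Qed.
Lemma qmulDr (R : realType) (a b c : quat R) : qmul c (qadd a b) = qadd (qmul c a) (qmul c b).
Proof. qsolve. Qed.
Lemma qmul1 (R : realType) (a : quat R) : qmul a (qone R) = a.
Proof. qsolve. Qed.
Lemma qmul1r (R : realType) (a : quat R) : qmul (qone R) a = a.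
Proof. qsolve. Qed.
Lemma qmul0 (R : realType) (a : quat R) : qmul a (qzero R) = qzero R.
Proof. qsolve. Qed.
Lemma qmul0r (R : realType) (a : quat R) : qmul (qzero R) a = qzero R.
Proof. qsolve. Qed.
Lemma qadd0 (R : realType) (a : quat R) : qadd a (qzero R) = a.
Proof. qsolve. Qed.
Lemma qadd0r (R : realType) (a : quat R) : qadd (qzero R) a = a.
Proof. qsolve. Qed.
Lemma qnorm2M (R : realType) (a b : quat R) : qnorm2 (qmul a b) = qnorm2 a * qnorm2 b.
Proof. qsolve. Qed.
Lemma qnorm2C (R : realType) (a : quat R) : qnorm2 (qconj a) = qnorm2 a.
Proof. qsolve. Qed.
Lemma qnorm2_ge0 (R : realType) (a : quat R) : 0 <= qnorm2 a.
Proof. rewrite /qnorm2; by rewrite !addr_ge0 ?sqr_ge0. Qed.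
Lemma qnorm2_eq0 (R : realType) (a : quat R) : qnorm2 a = 0 -> a = qzero R.
Proof.
case: a => a0 a1 a2 a3; rewrite /qnorm2 /= => H.
have h0 := sqr_ge0 a0; have h1 := sqr_ge0 a1; have h2 := sqr_ge0 a2; have h3 := sqr_ge0 a3.
have e0 : a0 = 0 by apply/eqP; rewrite -sqrf_eq0; apply/eqP; lra.
have e1 : a1 = 0 by apply/eqP; rewrite -sqrf_eq0; apply/eqP; lra.
have e2 : a2 = 0 by apply/eqP; rewrite -sqrf_eq0; apply/eqP; lra.
have e3 : a3 = 0 by apply/eqP; rewrite -sqrf_eq0; apply/eqP; lra.
by rewrite e0 e1 e2 e3.
Qed.
Lemma qnorm2_gt0 (R : realType) (a : quat R) : a <> qzero R -> 0 < qnorm2 a.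
Proof. move=> H; rewrite lt_def qnorm2_ge0 andbT; apply/eqP => /qnorm2_eq0. by []. Qed.
Lemma qmulVq (R : realType) (w : quat R) : qnorm2 w != 0 -> qmul (qinv w) w = qone R.
Proof. move=> H; move: H; case: w => w0 w1 w2 w3; rewrite /qnorm2 /= => H; qunf; congr Quat; field; done. Qed.
Lemma qmulqV (R : realType) (w : quat R) : qnorm2 w != 0 -> qmul w (qinv w) = qone R.
Proof. move=> H; move: H; case: w => w0 w1 w2 w3; rewrite /qnorm2 /= => H; qunf; congr Quat; field; done. Qed.
Lemma qnorm2V (R : realType) (w : quat R) : qnorm2 w != 0 -> qnorm2 (qinv w) = (qnorm2 w)^-1.
Proof. move=> H; move: H; case: w => w0 w1 w2 w3; rewrite /qnorm2 /= => H; qunf; field; done. Qed.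
Lemma qinv_norm1 (R : realType) (w : quat R) : qnorm2 w = 1 -> qinv w = qconj w.
Proof. move=> H; rewrite /qinv /= H !divr1; by case: w {H}. Qed.
Lemma qinvM (R : realType) (a b : quat R) : qnorm2 a != 0 -> qnorm2 b != 0 ->
  qinv (qmul a b) = qmul (qinv b) (qinv a).
Proof.
move=> Ha Hb. have Hab : qnorm2 (qmul a b) = qnorm2 a * qnorm2 b by apply: qnorm2M.
rewrite /qinv Hab. move: Ha Hb Hab; case: a => a0 a1 a2 a3; case: b => b0 b1 b2 b3.
rewrite /qnorm2 /= => Ha Hb Hab; rewrite /qmul /=; congr Quat; field; by rewrite Ha Hb.
Qed.

Lemma qadd4 (R : realType) (a b c d : quat R) : qadd (qadd a b) (qadd c d) = qadd (qadd a c) (qadd b d).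
Proof. case: a b c d => ????[????][????][????]; rewrite /qadd /=; congr Quat; ring. Qed.
Lemma qaddC (R : realType) (a b : quat R) : qadd a b = qadd b a.
Proof. qsolve. Qed.
Lemma qconjM (R : realType) (a b : quat R) : qconj (qmul a b) = qmul (qconj b) (qconj a).
Proof. qsolve. Qed.
Lemma qconjD (R : realType) (a b : quat R) : qconj (qadd a b) = qadd (qconj a) (qconj b).
Proof. qsolve. Qed.
Lemma qconjK (R : realType) (a : quat R) : qconj (qconj a) = a.
Proof. qsolve. Qed.
Lemma hmulA (R : realType) (A B C : hmat R) : hmul A (hmul B C) = hmul (hmul A B) C.
Proof. case: A B C => ????[????][????]; rewrite /hmul /=; congr HMat; by rewrite !qmulDl !qmulDr !qmulA qadd4. Qed.
Lemma hmul1 (R : realType) (A : hmat R) : hmul A (hone R) = A.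
Proof. qsolve. Qed.
Lemma hmul1r (R : realType) (A : hmat R) : hmul (hone R) A = A.
Proof. qsolve. Qed.
Lemma hstarM (R : realType) (A B : hmat R) : hstar (hmul A B) = hmul (hstar B) (hstar A).
Proof. case: A B => ????[????]; rewrite /hmul /hstar /=; congr HMat; by rewrite !qconjD !qconjM qaddC. Qed.
Lemma hstarJ (R : realType) : hstar (hJ R) = hJ R.
Proof. qsolve. Qed.
Lemma hstarK (R : realType) (A : hmat R) : hstar (hstar A) = A.
Proof. qsolve. Qed.
Lemma hJJ (R : realType) : hmul (hJ R) (hJ R) = hone R.
Proof. qsolve. Qed.


Lemma q0_nsub (R : realType) (a c : quat R) :
  q0 (qadd (qmul (qconj a) a) (qopp (qmul (qconj c) c))) = qnorm2 a - qnorm2 c.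
Proof. case: a c => ????[????]; rewrite /qnorm2 /=; ring. Qed.
Lemma qsub_eq0 (R : realType) (x y : quat R) : qadd x (qopp y) = qzero R -> x = y.
Proof. case: x y => ????[????]; rewrite /qadd /qopp /qzero => -[????]; congr Quat; lra. Qed.

Lemma SU_parts (R : realType) (a b c d : quat R) : SU11H (HMat a b c d) ->
  [/\ qnorm2 a = 1 + qnorm2 c, qnorm2 d = 1 + qnorm2 b,
      qmul (qconj a) b = qmul (qconj c) d &
      [/\ qadd (qmul (qconj a) a) (qopp (qmul (qconj c) c)) = qone R,
          qadd (qmul (qconj a) b) (qopp (qmul (qconj c) d)) = qzero R,
          qadd (qmul (qconj b) a) (qopp (qmul (qconj d) c)) = qzero R &
          qadd (qmul (qconj b) b) (qopp (qmul (qconj d) d)) = qopp (qone R)]].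
Proof.
have e2 : forall x y z : quat R, qmul x (qadd (qmul (qone R) y) (qmul (qzero R) z)) = qmul x y by move=> x y z; qsolve.
have e3 : forall x y z: quat R, qmul x (qadd (qmul (qzero R) y) (qmul (qopp (qone R)) z)) = qopp (qmul x z) by move=> x y z; qsolve.
rewrite /SU11H /hmul /hstar /hJ /hdiag /= !e2 !e3 => H.
have E00 := congr1 (@h00 R) H; have E01 := congr1 (@h01 R) H.
have E10 := congr1 (@h10 R) H; have E11 := congr1 (@h11 R) H.
rewrite /= in E00 E01 E10 E11.
have N1 := congr1 (@q0 R) E00; have N2 := congr1 (@q0 R) E11.
rewrite q0_nsub /= in N1; rewrite q0_nsub /= in N2.
split; [lra | lra | exact: qsub_eq0 | by split].
Qed.

Lemma qmul_oppr (R : realType) (x y : quat R) : qmul x (qopp y) = qopp (qmul x y).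
Proof. qsolve. Qed.
Lemma qmul_oppl (R : realType) (x y : quat R) : qmul (qopp x) y = qopp (qmul x y).
Proof. qsolve. Qed.
Lemma qconj_opp (R : realType) (x : quat R) : qconj (qopp x) = qopp (qconj x).
Proof. qsolve. Qed.
Definition qreal (R : realType) (r : R) : quat R := Quat r 0 0 0.
Arguments qreal {R}.
Lemma qmul_conjl (R : realType) (x : quat R) : qmul (qconj x) x = qreal (qnorm2 x).
Proof. qsolve. Qed.
Lemma qmul_conjr (R : realType) (x : quat R) : qmul x (qconj x) = qreal (qnorm2 x).
Proof. qsolve. Qed.

Lemma hJstar (R : realType) (a b c d : quat R) :
  hmul (hJ R) (hstar (HMat a b c d)) = HMat (qconj a) (qconj c) (qopp (qconj b)) (qopp (qconj d)).
Proof. rewrite /hmul /hJ /hdiag /hstar /=; case: a b c d => ????[????][????][????].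
congr HMat; rewrite /qmul /qadd /qone /qzero /qopp /qconj /=; congr Quat; ring. Qed.

Lemma AJAstar (R : realType) (a b c d : quat R) :
  hmul (HMat a b c d) (hmul (hJ R) (hstar (HMat a b c d))) =
  HMat (qadd (qreal (qnorm2 a)) (qopp (qreal (qnorm2 b))))
       (qadd (qmul a (qconj c)) (qopp (qmul b (qconj d))))
       (qadd (qmul c (qconj a)) (qopp (qmul d (qconj b))))
       (qadd (qreal (qnorm2 c)) (qopp (qreal (qnorm2 d)))).
Proof. by rewrite hJstar /hmul /= !qmul_oppr !qmul_conjr. Qed.

Lemma L1 (R : realType) (a b c d : quat R) :
  qmul (qconj a) (qadd (qmul a (qconj c)) (qopp (qmul b (qconj d)))) =
  qadd (qmul (qmul (qconj a) a) (qconj c)) (qopp (qmul (qmul (qconj a) b) (qconj d))).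
Proof. by rewrite qmulDr qmul_oppr !qmulA. Qed.

Lemma L2 (R : realType) (a c d : quat R) : qnorm2 a = qnorm2 d ->
  qadd (qmul (qmul (qconj a) a) (qconj c)) (qopp (qmul (qmul (qconj c) d) (qconj d))) = qzero R.
Proof.
move=> H; rewrite qmul_conjl -[qmul (qmul (qconj c) d) _]qmulA qmul_conjr H.
case: c => ????; rewrite /qreal /qmul /qadd /qopp /qzero /=; congr Quat; ring.
Qed.

Lemma L3 (R : realType) (a X : quat R) : qnorm2 a != 0 -> qmul (qconj a) X = qzero R -> X = qzero R.
Proof.
move=> Ha HX. have Hc : qnorm2 (qconj a) != 0 by rewrite qnorm2C.
by rewrite -[X]qmul1r -(qmulVq Hc) -qmulA HX qmul0.
Qed.

Lemma qconj_sub (R : realType) (a b c d : quat R) :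
  qconj (qadd (qmul a (qconj c)) (qopp (qmul b (qconj d)))) = qadd (qmul c (qconj a)) (qopp (qmul d (qconj b))).
Proof. by rewrite qconjD qconj_opp !qconjM !qconjK. Qed.

Lemma SU_right (R : realType) (A : hmat R) : SU11H A -> hmul A (hmul (hJ R) (hstar A)) = hJ R.
Proof.
case: A => a b c d HA. have [Na Nd E _] := SU_parts HA.
have Nab : qnorm2 (qmul (qconj a) b) = qnorm2 (qmul (qconj c) d) by rewrite E.
rewrite !qnorm2M !qnorm2C Na Nd in Nab.
have Nbc : qnorm2 b = qnorm2 c.
  have e : (1 + qnorm2 c) * qnorm2 b - qnorm2 c * (1 + qnorm2 b) = qnorm2 b - qnorm2 c by ring.
  rewrite Nab subrr in e; lra.
have Nad : qnorm2 a = qnorm2 d by lra.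
have Ha : qnorm2 a != 0 by rewrite Na; have := qnorm2_ge0 c; lra.
have X0 : qadd (qmul a (qconj c)) (qopp (qmul b (qconj d))) = qzero R.
  by apply: (L3 Ha); rewrite L1 E L2.
rewrite AJAstar X0 -qconj_sub X0 /qreal /hJ /hdiag /qone /qopp /qadd /qzero /=.
congr HMat; congr Quat; rewrite ?oppr0 ?addr0 //; lra.
Qed.


Lemma hJJl (R : realType) (X : hmat R) : hmul (hJ R) (hmul (hJ R) X) = X.
Proof. by rewrite hmulA hJJ hmul1r. Qed.

Lemma hinv_l (R : realType) (A : hmat R) : SU11H A -> hmul (hinv A) A = hone R.
Proof.
move=> HA; rewrite /hinv -hmulA -[hmul (hmul (hstar A) _) A]hmulA HA hJJ //.
Qed.

Lemma hinv_r (R : realType) (A : hmat R) : SU11H A -> hmul A (hinv A) = hone R.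
Proof.
move=> HA; rewrite /hinv [hmul (hJ R) (hmul _ _)]hmulA hmulA (SU_right HA) hJJ //.
Qed.

Lemma SU_mul (R : realType) (A B : hmat R) : SU11H A -> SU11H B -> SU11H (hmul A B).
Proof.
move=> HA HB; rewrite /SU11H hstarM [hmul (hJ R) (hmul A B)]hmulA -hmulA.
by rewrite [hmul (hstar A) (hmul (hmul (hJ R) A) B)]hmulA HA HB.
Qed.

Lemma SU_inv (R : realType) (A : hmat R) : SU11H A -> SU11H (hinv A).
Proof.
move=> HA; rewrite /SU11H.
have -> : hstar (hinv A) = hmul (hmul (hJ R) A) (hJ R) by rewrite /hinv !hstarM hstarJ hstarK.
by rewrite -hmulA hJJl -hmulA hinv_r // hmul1.
Qed.

Lemma SU_one (R : realType) : SU11H (hone R).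
Proof. have E : hstar (hone R) = hone R by qsolve. by rewrite /SU11H hmul1 E hmul1r. Qed.

Lemma norm_expand (R : realType) (a b y : quat R) :
  qnorm2 (qadd (qmul a y) b) = qnorm2 a * qnorm2 y + qnorm2 b + 2 * q0 (qmul (qconj y) (qmul (qconj a) b)).
Proof. case: a b y => ????[????][????]; rewrite /qnorm2 /qmul /qadd /qconj /=; ring. Qed.

Lemma SU_den (R : realType) (a b c d y : quat R) : SU11H (HMat a b c d) ->
  qnorm2 (qadd (qmul c y) d) = qnorm2 (qadd (qmul a y) b) + 1 - qnorm2 y.
Proof. move=> HA; have [Na Nd E _] := SU_parts HA. rewrite !norm_expand E Na Nd; ring. Qed.

Lemma SU_den_pos (R : realType) (A : hmat R) (y : quat R) : SU11H A -> qnorm2 y < 1 ->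
  0 < qnorm2 (qadd (qmul (h10 A) y) (h11 A)).
Proof.
case: A => a b c d HA Hy /=; rewrite (SU_den y HA).
have := qnorm2_ge0 (qadd (qmul a y) b); lra.
Qed.

Lemma hact_ball (R : realType) (A : hmat R) (y : quat R) : SU11H A -> qnorm2 y < 1 ->
  qnorm2 (hact A y) < 1.
Proof.
move=> HA Hy; have Hd := SU_den_pos HA Hy.
move: HA Hd; case: A => a b c d HA /= Hd.
rewrite /hact /= qnorm2M qnorm2V ?gt_eqF //.
rewrite ltr_pdivrMr // mul1r (SU_den y HA); lra.
Qed.

Lemma qinvK (R : realType) (w : quat R) : qnorm2 w != 0 -> qinv (qinv w) = w.
Proof.
case: w => w0 w1 w2 w3; rewrite /qinv /qnorm2 /= => H.
have Hn : (w0 / (w0 ^+ 2 + w1 ^+ 2 + w2 ^+ 2 + w3 ^+ 2)) ^+ 2 +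
          (- w1 / (w0 ^+ 2 + w1 ^+ 2 + w2 ^+ 2 + w3 ^+ 2)) ^+ 2 +
          (- w2 / (w0 ^+ 2 + w1 ^+ 2 + w2 ^+ 2 + w3 ^+ 2)) ^+ 2 +
          (- w3 / (w0 ^+ 2 + w1 ^+ 2 + w2 ^+ 2 + w3 ^+ 2)) ^+ 2 =
          (w0 ^+ 2 + w1 ^+ 2 + w2 ^+ 2 + w3 ^+ 2)^-1 by field.
rewrite Hn; congr Quat; field; rewrite ?invr_eq0 //.
Qed.

Lemma num_comp (R : realType) (a b c d a' b' : quat R) (y : quat R) :
  qadd (qmul (qadd (qmul a' a) (qmul b' c)) y) (qadd (qmul a' b) (qmul b' d)) =
  qadd (qmul a' (qadd (qmul a y) b)) (qmul b' (qadd (qmul c y) d)).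
Proof. by rewrite qmulDl -!qmulA qadd4 -!qmulDr. Qed.

Lemma G1 (R : realType) (x u w z : quat R) : qnorm2 w != 0 ->
  qadd (qmul x (qmul u (qinv w))) z = qmul (qadd (qmul x u) (qmul z w)) (qinv w).
Proof. by move=> Hw; rewrite qmulDl -!qmulA qmulqV // qmul1 qmulA. Qed.

Lemma hact_comp (R : realType) (A B : hmat R) (y : quat R) : SU11H A -> SU11H B -> qnorm2 y < 1 ->
  hact (hmul A B) y = hact A (hact B y).
Proof.
move=> HA HB Hy.
have HBy := hact_ball HB Hy. have HdA := SU_den_pos HA HBy. have HdB := SU_den_pos HB Hy.
move: HA HB HBy HdA HdB; case: A => a' b' c' d'; case: B => a b c d HA HB HBy HdA HdB.
move: HdA HdB HBy; rewrite /hact /hmul /= => HdA HdB HBy.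
set u := qadd (qmul a y) b in HdA HBy *. set w := qadd (qmul c y) d in HdA HdB HBy *.
have Hw : qnorm2 w != 0 by rewrite gt_eqF.
rewrite !num_comp -/u -/w !G1 //.
set U := qadd (qmul a' u) (qmul b' w). set V := qadd (qmul c' u) (qmul d' w).
have HV : qnorm2 V != 0.
  move: HdA; rewrite G1 // qnorm2M qnorm2V //; apply: contraTneq => ->; by rewrite mul0r ltxx.
have Hiw : qnorm2 (qinv w) != 0 by rewrite qnorm2V // invr_eq0.
rewrite qinvM // qinvK // -!qmulA [qmul (qinv w) (qmul w _)]qmulA qmulVq // qmul1r //.
Qed.


Definition i50 : 'I_5 := @Ordinal 5 0 isT.
Definition i51 : 'I_5 := @Ordinal 5 1 isT.
Definition i52 : 'I_5 := @Ordinal 5 2 isT.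
Definition i53 : 'I_5 := @Ordinal 5 3 isT.
Definition i54 : 'I_5 := @Ordinal 5 4 isT.

Lemma I5_ind (P : 'I_5 -> Prop) : P i50 -> P i51 -> P i52 -> P i53 -> P i54 -> forall i, P i.
Proof.
move=> H0 H1 H2 H3 H4 [[|[|[|[|[|n]]]]] Hi] //.
- by rewrite (bool_irrelevance Hi isT).
- by rewrite (bool_irrelevance Hi isT).
- by rewrite (bool_irrelevance Hi isT).
- by rewrite (bool_irrelevance Hi isT).
- by rewrite (bool_irrelevance Hi isT).
Qed.

Lemma sum5 (R : realType) (F : 'I_5 -> R) : \sum_(k < 5) F k = F i50 + F i51 + F i52 + F i53 + F i54.
Proof.
rewrite !big_ord_recr big_ord0 /= add0r.
by congr (_ + _ + _ + _ + _); congr F; apply: val_inj.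
Qed.

Lemma zetaE (R : realType) (y : quat R) :
  [/\ zeta y i50 0 = 2 * q0 y / (1 - qnorm2 y), zeta y i51 0 = 2 * q1 y / (1 - qnorm2 y),
      zeta y i52 0 = 2 * q2 y / (1 - qnorm2 y), zeta y i53 0 = 2 * q3 y / (1 - qnorm2 y) &
      zeta y i54 0 = (1 + qnorm2 y) / (1 - qnorm2 y)].
Proof. by split; rewrite mxE. Qed.

Lemma e5E (R : realType) :
  [/\ e5 R i50 0 = 0, e5 R i51 0 = 0, e5 R i52 0 = 0, e5 R i53 0 = 0 & e5 R i54 0 = 1].
Proof. by split; rewrite mxE. Qed.

Lemma col5_ext (R : realType) (v w : 'cV[R]_5) :
  v i50 0 = w i50 0 -> v i51 0 = w i51 0 -> v i52 0 = w i52 0 -> v i53 0 = w i53 0 ->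
  v i54 0 = w i54 0 -> v = w.
Proof.
move=> H0 H1 H2 H3 H4; apply/matrixP => i j; rewrite (ord1 j).
by elim/I5_ind: i.
Qed.

Lemma mulmx5E (R : realType) (E : 'M[R]_5) (v : 'cV[R]_5) (i : 'I_5) :
  (E *m v) i 0 = E i i50 * v i50 0 + E i i51 * v i51 0 + E i i52 * v i52 0 + E i i53 * v i53 0 + E i i54 * v i54 0.
Proof. by rewrite mxE sum5. Qed.

Lemma zeta0 (R : realType) : zeta (qzero R) = e5 R.
Proof.
have [z0 z1 z2 z3 z4] := zetaE (qzero R); have [e0 e1 e2 e3 e4] := e5E R.
apply: col5_ext; rewrite ?z0 ?z1 ?z2 ?z3 ?z4 ?e0 ?e1 ?e2 ?e3 ?e4 /qnorm2 /qzero /=; 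
  rewrite ?expr0n /= ?addr0 ?subr0 ?mulr0 ?mul0r ?divr1 //.
Qed.

Lemma zeta_inj (R : realType) (u v : quat R) : qnorm2 u < 1 -> qnorm2 v < 1 -> zeta u = zeta v -> u = v.
Proof.
move=> Hu Hv E.
have [u0 u1 u2 u3 u4] := zetaE u; have [v0 v1 v2 v3 v4] := zetaE v.
have hu : 1 - qnorm2 u != 0 by rewrite subr_eq0 eq_sym lt_eqF.
have hv : 1 - qnorm2 v != 0 by rewrite subr_eq0 eq_sym lt_eqF.
have N : qnorm2 u = qnorm2 v.
  have := congr1 (fun M : 'cV[R]_5 => M i54 0) E; rewrite /= u4 v4 => H.
  have F : (1 + qnorm2 u) / (1 - qnorm2 u) - (1 + qnorm2 v) / (1 - qnorm2 v) =
      2 * (qnorm2 u - qnorm2 v) / ((1 - qnorm2 u) * (1 - qnorm2 v)) by field; rewrite hu hv.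
  move: F; rewrite H subrr => /esym /eqP; rewrite !mulf_eq0 invr_eq0 mulf_eq0 (negbTE hu) (negbTE hv) pnatr_eq0 /= orbF subr_eq0.
  by move/eqP.
have e : forall a b : R, 2 * a / (1 - qnorm2 u) = 2 * b / (1 - qnorm2 u) -> a = b.
  move=> a b H. have H2 : 2 * a = 2 * b by have := congr1 (fun t => t * (1 - qnorm2 u)) H; rewrite /= !divfK.
  have two : (2:R) != 0 by rewrite pnatr_eq0.
  exact: (mulfI two H2).
have c0 := congr1 (fun M : 'cV[R]_5 => M i50 0) E; have c1 := congr1 (fun M : 'cV[R]_5 => M i51 0) E.
have c2 := congr1 (fun M : 'cV[R]_5 => M i52 0) E; have c3 := congr1 (fun M : 'cV[R]_5 => M i53 0) E.
rewrite /= u0 v0 -N in c0; rewrite /= u1 v1 -N in c1; rewrite /= u2 v2 -N in c2; rewrite /= u3 v3 -N in c3.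
move: (e _ _ c0) (e _ _ c1) (e _ _ c2) (e _ _ c3); case: u {Hu E hu N e c0 c1 c2 c3 u0 u1 u2 u3 u4}; case: v {Hv hv v0 v1 v2 v3 v4}.
by move=> ???? ???? /= -> -> -> ->.
Qed.

Lemma qinv1 (R : realType) : qinv (qone R) = qone R.
Proof. rewrite qinv_norm1; first by rewrite /qconj /qone /= oppr0. by rewrite /qnorm2 /=; ring. Qed.

Lemma hact_one (R : realType) (y : quat R) : hact (hone R) y = y.
Proof. by rewrite /hact /hone /hdiag /= qmul1r qadd0 qmul0r qadd0r qinv1 qmul1. Qed.

Lemma eta_one (R : realType) : eta_of (hone R) 1.
Proof. by move=> y _; rewrite hact_one mul1mx. Qed.

Lemma eta_mul (R : realType) (A B : hmat R) (E F : 'M[R]_5) : SU11H A -> SU11H B ->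
  eta_of A E -> eta_of B F -> eta_of (hmul A B) (E *m F).
Proof.
move=> HA HB EA EB y Hy.
by rewrite hact_comp // EA ?hact_ball // EB // mulmxA.
Qed.

Lemma eta_inv (R : realType) (A : hmat R) (E : 'M[R]_5) : SU11H A -> E \in unitmx ->
  eta_of A E -> eta_of (hinv A) (invmx E).
Proof.
move=> HA HE EA y Hy.
have HiA := SU_inv HA. have Hz := hact_ball HiA Hy.
have : hact A (hact (hinv A) y) = y by rewrite -hact_comp // hinv_r // hact_one.
move=> Ey; have := EA _ Hz; rewrite Ey => ->.
by rewrite mulmxA mulVmx // mul1mx.
Qed.

Definition qhalf (R : realType) (k : nat) : quat R :=
  match k with 0 => Quat (1/2) 0 0 0 | 1 => Quat 0 (1/2) 0 0 | 2 => Quat 0 0 (1/2) 0 | _ => Quat 0 0 0 (1/2) end.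

Lemma qhalf_norm (R : realType) (k : nat) : qnorm2 (qhalf R k) = 1/4.
Proof.
by case: k => [|[|[|k]]]; rewrite /qnorm2 /=; field.
Qed.

Lemma eta_key (R : realType) (A : hmat R) (E F : 'M[R]_5) :
  eta_of A E -> eta_of A F -> forall y, qnorm2 y < 1 -> forall i, (E *m zeta y) i 0 = (F *m zeta y) i 0.
Proof. by move=> HE HF y Hy i; rewrite -HE // -HF. Qed.

Lemma cancel_lin (R : realType) (x x' z z' c d : R) : c != 0 -> z = z' ->
  x * c + z * d = x' * c + z' * d -> x = x'.
Proof. move=> Hc -> /addIr; exact: (mulIf Hc). Qed.

Lemma eta_unique (R : realType) (A : hmat R) (E F : 'M[R]_5) : eta_of A E -> eta_of A F -> E = F.
Proof.
move=> HE HF. have K := eta_key HE HF.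
have n0 : qnorm2 (qzero R) < 1 by rewrite /qnorm2 /=; rewrite expr0n /= !addr0 ltr01.
have [e0 e1 e2 e3 e4] := e5E R.
have C4 : forall i, E i i54 = F i i54.
  move=> i; have := K _ n0 i; rewrite zeta0 !mulmx5E e0 e1 e2 e3 e4 !mulr0 !add0r !mulr1 //.
have nh : forall k, qnorm2 (qhalf R k) < 1 by move=> k; rewrite qhalf_norm; lra.
have c_ne : 2 * (1/2) / (1 - 1/4) != (0:R).
  have -> : 2 * (1/2) / (1 - 1/4) = 4/3 :> R by field.
  by rewrite mulf_neq0 ?invr_eq0 ?pnatr_eq0.
apply/matrixP => i j; elim/I5_ind: j; last exact: C4.
- have := K _ (nh 0%N) i; have [z0 z1 z2 z3 z4] := zetaE (qhalf R 0).
  rewrite !mulmx5E z0 z1 z2 z3 z4 qhalf_norm /= ?(mulr0, mul0r, addr0, add0r).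
  by apply: cancel_lin c_ne (C4 i).
- have := K _ (nh 1%N) i; have [z0 z1 z2 z3 z4] := zetaE (qhalf R 1).
  rewrite !mulmx5E z0 z1 z2 z3 z4 qhalf_norm /= ?(mulr0, mul0r, addr0, add0r).
  by apply: cancel_lin c_ne (C4 i).
- have := K _ (nh 2%N) i; have [z0 z1 z2 z3 z4] := zetaE (qhalf R 2).
  rewrite !mulmx5E z0 z1 z2 z3 z4 qhalf_norm /= ?(mulr0, mul0r, addr0, add0r).
  by apply: cancel_lin c_ne (C4 i).
- have := K _ (nh 3%N) i; have [z0 z1 z2 z3 z4] := zetaE (qhalf R 3).
  rewrite !mulmx5E z0 z1 z2 z3 z4 qhalf_norm /= ?(mulr0, mul0r, addr0, add0r).
  by apply: cancel_lin c_ne (C4 i).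
Qed.

Definition qc (R : realType) (x : quat R) (n : nat) : R :=
  match n with 0 => q0 x | 1 => q1 x | 2 => q2 x | _ => q3 x end.
Definition eb (R : realType) (n : nat) : quat R :=
  match n with 0 => Quat 1 0 0 0 | 1 => Quat 0 1 0 0 | 2 => Quat 0 0 1 0 | _ => Quat 0 0 0 1 end.
Definition ldiag (R : realType) (p q : quat R) (i j : nat) : R :=
  match i with
  | 4 => match j with 4 => 1 | _ => 0 end
  | _ => match j with 4 => 0 | _ => qc (qmul (qmul p (eb R j)) (qconj q)) i end end.
Definition Ld (R : realType) (p q : quat R) : 'M[R]_5 := \matrix_(i, j) ldiag p q i j.

Lemma hact_diag (R : realType) (p q y : quat R) : qnorm2 q = 1 ->
  hact (hdiag p q) y = qmul (qmul p y) (qconj q).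
Proof. by move=> Hq; rewrite /hact /hdiag /= qadd0 qmul0r qadd0r qinv_norm1. Qed.

Lemma eta_diag (R : realType) (p q : quat R) : qnorm2 p = 1 -> qnorm2 q = 1 -> eta_of (hdiag p q) (Ld p q).
Proof.
move=> Hp Hq y Hy; rewrite hact_diag //.
have Nz : qnorm2 (qmul (qmul p y) (qconj q)) = qnorm2 y by rewrite !qnorm2M qnorm2C Hp Hq mul1r mulr1.
have [z0 z1 z2 z3 z4] := zetaE (qmul (qmul p y) (qconj q)); have [y0 y1 y2 y3 y4] := zetaE y.
apply: col5_ext; rewrite mulmx5E ?z0 ?z1 ?z2 ?z3 ?z4 y0 y1 y2 y3 y4 !mxE Nz /ldiag /=;
  move: (1 - qnorm2 y) (qnorm2 y) => t n; case: p q y {Hp Hq Hy Nz z0 z1 z2 z3 z4 y0 y1 y2 y3 y4} => ????[????][????];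
  rewrite /qc /eb /qmul /qconj /=; ring.
Qed.


Lemma det_rec (R : realType) n (f : 'I_n.+1 -> 'I_n.+1 -> R) :
  \det (\matrix_(i, j) f i j) =
  \sum_(j < n.+1) (-1) ^+ j * f ord0 j * \det (\matrix_(i < n, k < n) f (lift ord0 i) (lift j k)).
Proof.
rewrite (expand_det_row _ ord0); apply: eq_bigr => j _.
rewrite /cofactor mxE add0n mulrA [_ * (-1) ^+ _]mulrC; congr (_ * \det _).
by apply/matrixP => i k; rewrite !mxE.
Qed.

Definition Idl (R : realType) (p q : quat R) : 'M[R]_4 :=
  \matrix_(i < 4, j < 4) ((i == j :> nat)%:R - ldiag p q i j).

Lemma det_Idl (R : realType) (p q : quat R) :
  \det (Idl p q) = (1 + qnorm2 p * qnorm2 q - 2 * q0 p * q0 q) ^+ 2 -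
                   4 * (qnorm2 p - q0 p ^+ 2) * (qnorm2 q - q0 q ^+ 2).
Proof.
rewrite /Idl det_rec !big_ord_recr big_ord0 !det_rec !big_ord_recr !big_ord0.
rewrite !det_rec !big_ord_recr !big_ord0 !det_rec !big_ord_recr !big_ord0 !det_mx00 /=.
rewrite /bump /= ?(add0n, add1n) /ldiag /= /qc /eb /=.
case: p q => [p0 p1 p2 p3] [q0 q1 q2 q3]; rewrite /qnorm2 /qmul /qconj /=.
ring.
Qed.


Lemma mulmx5 (R : realType) (A B : 'M[R]_5) (i j : 'I_5) :
  (A *m B) i j = A i i50 * B i50 j + A i i51 * B i51 j + A i i52 * B i52 j + A i i53 * B i53 j + A i i54 * B i54 j.
Proof. by rewrite mxE sum5. Qed.

Lemma J5J5 (R : realType) : J5 R *m J5 R = 1%:M.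
Proof.
apply/matrixP => i j; rewrite mulmx5 !mxE.
by elim/I5_ind: i; elim/I5_ind: j; rewrite /= ?(mulr0, mul0r, addr0, add0r, mulr1, mulN1r, opprK).
Qed.

Lemma J5tr (R : realType) : (J5 R)^T = J5 R.
Proof. by apply/matrixP => i j; rewrite !mxE eq_sym; case: eqP => // ->. Qed.

Definition isoJ (R : realType) (P : 'M[R]_5) := P^T *m J5 R *m P = J5 R.

Lemma isoJ_linv (R : realType) (P : 'M[R]_5) : isoJ P -> (J5 R *m P^T *m J5 R) *m P = 1%:M.
Proof. by move=> H; rewrite -!mulmxA (mulmxA P^T) H J5J5. Qed.

Lemma isoJ_rinv (R : realType) (P : 'M[R]_5) : isoJ P -> P *m (J5 R *m P^T *m J5 R) = 1%:M.
Proof. by move=> H; apply: mulmx1C; apply: isoJ_linv. Qed.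

Lemma isoJ_unit (R : realType) (P : 'M[R]_5) : isoJ P -> P \in unitmx.
Proof. by move=> H; case: (mulmx1_unit (isoJ_rinv H)). Qed.

Lemma isoJ_invE (R : realType) (P : 'M[R]_5) : isoJ P -> invmx P = J5 R *m P^T *m J5 R.
Proof.
move=> H; have U := isoJ_unit H.
by rewrite -[LHS]mul1mx -(isoJ_linv H) -[(_ *m P) *m _]mulmxA mulmxV // mulmx1.
Qed.

Lemma isoJ_right (R : realType) (P : 'M[R]_5) : isoJ P -> P *m J5 R *m P^T = J5 R.
Proof.
move=> H; have := isoJ_rinv H; rewrite !mulmxA => /(congr1 (fun M => M *m J5 R)).
by rewrite -mulmxA J5J5 mulmx1 mul1mx.
Qed.

Lemma isoJ_mul (R : realType) (P Q : 'M[R]_5) : isoJ P -> isoJ Q -> isoJ (P *m Q).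
Proof.
move=> HP HQ; rewrite /isoJ trmx_mul mulmxA -[Q^T *m P^T *m J5 R]mulmxA.
by rewrite -[Q^T *m (P^T *m J5 R) *m P]mulmxA HP HQ.
Qed.

Lemma isoJ_1 (R : realType) : isoJ (1%:M : 'M[R]_5).
Proof. by rewrite /isoJ trmx1 mul1mx mulmx1. Qed.

Lemma isoJ_exp (R : realType) (P : 'M[R]_5) n : isoJ P -> isoJ (P ^+ n).
Proof. move=> H; elim: n => [|n IH]; first by rewrite expr0; exact: isoJ_1. by rewrite exprS; exact: isoJ_mul. Qed.

Lemma isoJ_J (R : realType) : isoJ (J5 R).
Proof. by rewrite /isoJ J5tr J5J5 mul1mx. Qed.

Lemma isoJ_tr (R : realType) (P : 'M[R]_5) : isoJ P -> isoJ P^T.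
Proof. by move=> H; rewrite /isoJ trmxK; exact: isoJ_right. Qed.

Lemma isoJ_inv (R : realType) (P : 'M[R]_5) : isoJ P -> isoJ (invmx P).
Proof.
move=> H; rewrite isoJ_invE //.
apply: isoJ_mul; [apply: isoJ_mul; [exact: isoJ_J | exact: isoJ_tr] | exact: isoJ_J].
Qed.

Lemma PtJP (R : realType) (P : 'M[R]_5) (a b : 'I_5) :
  (P^T *m J5 R *m P) a b = P i50 a * P i50 b + P i51 a * P i51 b + P i52 a * P i52 b
                          + P i53 a * P i53 b - P i54 a * P i54 b.
Proof. rewrite mulmx5 !mulmx5 !mxE /=; ring. Qed.

Lemma col4_fix (R : realType) (P : 'M[R]_5) : P *m e5 R = e5 R -> forall i, P i i54 = e5 R i 0.
Proof.
move=> H i; have := congr1 (fun M : 'cV[R]_5 => M i 0) H; rewrite /= mulmx5E.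
have [e0 e1 e2 e3 e4] := e5E R; rewrite e0 e1 e2 e3 e4 !mulr0 !add0r mulr1 //.
Qed.

Lemma sq_le1 (R : realType) (x : R) : x ^+ 2 <= 1 -> `|x| <= 1.
Proof. move=> H; rewrite ler_norml; apply/andP; split; nra. Qed.

Lemma isoJ_fix_bound (R : realType) (P : 'M[R]_5) : isoJ P -> P *m e5 R = e5 R ->
  forall i j, `|P i j| <= 1.
Proof.
move=> HP Hf; have C := col4_fix Hf; have [e0 e1 e2 e3 e4] := e5E R.
have gen : forall j : 'I_5, (j < 4)%N -> forall i, `|P i j| <= 1.
  move=> j Hj.
  have E1 := congr1 (fun M : 'M[R]_5 => M i54 j) HP.
  have E2 := congr1 (fun M : 'M[R]_5 => M j j) HP.
  rewrite /= PtJP !C e0 e1 e2 e3 e4 !mxE in E1.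
  rewrite /= PtJP !mxE eqxx Hj in E2.
  have Hj4 : (i54 == j) = false by apply/negbTE; move: Hj; apply: contraTneq => <-.
  rewrite Hj4 !mul0r !add0r mul1r in E1.
  have P4 : P i54 j = 0 by rewrite -[P i54 j]opprK E1 oppr0.
  rewrite P4 mulr0 subr0 in E2.
  have s0 := sqr_ge0 (P i50 j); have s1 := sqr_ge0 (P i51 j).
  have s2 := sqr_ge0 (P i52 j); have s3 := sqr_ge0 (P i53 j).
  rewrite -!expr2 in E2.
  elim/I5_ind; [apply: sq_le1; lra | apply: sq_le1; lra | apply: sq_le1; lra | apply: sq_le1; lra |].
  by rewrite P4 normr0 ler01.
move=> i j; elim/I5_ind: j i; try (apply: gen; by []).
by elim/I5_ind; rewrite C ?e0 ?e1 ?e2 ?e3 ?e4 ?normr0 ?normr1 ?ler01.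
Qed.

Lemma cell_close (R : realType) (h x y : R) : 0 < h -> -1 <= x -> -1 <= y ->
  Num.truncn ((x + 1) / h) = Num.truncn ((y + 1) / h) -> `|x - y| < h.
Proof.
move=> hp hx hy E.
have ax : 0 <= (x + 1) / h by apply: divr_ge0; lra.
have ay : 0 <= (y + 1) / h by apply: divr_ge0; lra.
move: (truncn_itv ax) (truncn_itv ay); rewrite E => /andP[a1 a2] /andP[b1 b2].
rewrite -natr1 in a2 b2.
set t := (Num.truncn ((y + 1) / h))%:R in a1 a2 b1 b2.
set a := (x + 1) / h in a1 a2. set b := (y + 1) / h in b1 b2.
have ea : x = a * h - 1 by rewrite /a divfK ?gt_eqF //; lra.
have eb : y = b * h - 1 by rewrite /b divfK ?gt_eqF //; lra.
rewrite ea eb ltr_norml; apply/andP; split; nra.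
Qed.

Lemma pigeon (T : finType) (F : nat -> T) : exists m1 m2, (m1 < m2)%N /\ F m1 = F m2.
Proof.
pose G := fun i : 'I_(#|T|.+1) => F i.
have : ~~ injectiveb G.
  apply/negP => /injectiveP Hi; have := leq_card G Hi; by rewrite card_ord ltnn.
case/injectivePn => x [y nxy E].
case: (ltngtP x y) => [lt|lt|eq].
- by exists x, y.
- by exists y, x.
- by move: nxy; rewrite (val_inj eq) eqxx.
Qed.

Lemma mx_bound (R : realType) (A : 'M[R]_5) : exists c, 0 <= c /\ forall i j, `|A i j| <= c.
Proof.
exists (\sum_(k : 'I_5 * 'I_5) `|A k.1 k.2|); split; first by apply: sumr_ge0.
move=> i j; rewrite (bigD1 (i, j)) //= lerDl; exact: sumr_ge0.
Qed.

Lemma mulmx_bound (R : realType) (A B : 'M[R]_5) (a b : R) :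
  (forall i j, `|A i j| <= a) -> (forall i j, `|B i j| <= b) -> forall i j, `|(A *m B) i j| <= 5 * (a * b).
Proof.
move=> HA HB i j; rewrite mxE; apply: le_trans (ler_norm_sum _ _ _) _.
have -> : 5 * (a * b) = \sum_(k < 5) (a * b) by rewrite sumr_const card_ord mulr_natl.
apply: ler_sum => k _; rewrite normrM; apply: ler_pM => //.
Qed.

Fixpoint mxpow (R : realType) (P : 'M[R]_5) (n : nat) : 'M[R]_5 :=
  match n with 0 => 1%:M | n.+1 => P *m mxpow P n end.

Lemma mxpowE (R : realType) (P : 'M[R]_5) n : P ^+ n = mxpow P n.
Proof. elim: n => [|n IH] //=; by rewrite exprS IH. Qed.

Lemma mxpowD (R : realType) (P : 'M[R]_5) m n : mxpow P (m + n) = mxpow P m *m mxpow P n.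
Proof. elim: m => [|m IH] /=; first by rewrite mul1mx. by rewrite IH mulmxA. Qed.

Lemma isoJ_fix_inv (R : realType) (P : 'M[R]_5) : isoJ P -> P *m e5 R = e5 R -> invmx P *m e5 R = e5 R.
Proof. by move=> H Hf; rewrite -{1}Hf mulmxA mulVmx ?mul1mx // isoJ_unit. Qed.

Lemma mxpow_iso (R : realType) (P : 'M[R]_5) n : isoJ P -> isoJ (mxpow P n).
Proof. by move=> H; rewrite -mxpowE; apply: isoJ_exp. Qed.

Lemma mxpow_fix (R : realType) (P : 'M[R]_5) n : P *m e5 R = e5 R -> mxpow P n *m e5 R = e5 R.
Proof. move=> H; elim: n => [|n IH] /=; first by rewrite mul1mx. by rewrite -mulmxA IH H. Qed.

Lemma mxpow_conj (R : realType) (g D : 'M[R]_5) n : g \in unitmx ->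
  mxpow (g *m D *m invmx g) n = g *m mxpow D n *m invmx g.
Proof.
move=> U; elim: n => [|n IH] /=; first by rewrite mulmx1 mulmxV.
by rewrite IH !mulmxA -[g *m D *m invmx g *m g]mulmxA mulVmx // mulmx1.
Qed.

Lemma group_pow (R : realType) (Gam : 'M[R]_5 -> Prop) : is_subgroup5 Gam ->
  forall d, Gam d -> forall n, Gam (mxpow d n).
Proof. move=> [H1 [HM _]] d Hd; elim => [|n IH] //=; exact: HM. Qed.

Lemma stab_trivial (R : realType) (Gam : 'M[R]_5 -> Prop)
  (HGsub : is_subgroup5 Gam) (HGso : forall A, Gam A -> SOp41 A)
  (HGdisc : discrete5 Gam) (HGtf : torsion_free5 Gam)
  (g : 'M[R]_5) (Hg : SOp41 g) (d : 'M[R]_5) (Hd : Gam d)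
  (Hfix : d *m (g *m e5 R) = g *m e5 R) : d = 1.
Proof.
have Ig : isoJ g by case: Hg.
have Id : isoJ d by case: (HGso d Hd).
have Ug := isoJ_unit Ig.
pose D := invmx g *m d *m g.
have ID : isoJ D by apply: isoJ_mul => //; apply: isoJ_mul => //; apply: isoJ_inv.
have FD : D *m e5 R = e5 R by rewrite /D -!mulmxA Hfix mulmxA mulVmx // mul1mx.
have dE : d = g *m D *m invmx g by rewrite /D !mulmxA mulmxV // mul1mx -mulmxA mulmxV // mulmx1.
have [cg [cg0 Hcg]] := mx_bound g.
have [ci [ci0 Hci]] := mx_bound (invmx g).
have [H1 _] := HGsub.
have [eps eps0 Heps] := HGdisc 1 H1.
pose h := eps / (125 * (cg * ci) + 1).
have hp : 0 < h by rewrite /h divr_gt0 // ltr_wpDl // mulr_ge0 // mulr_ge0.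
pose K := Num.truncn (2 / h).
pose F := fun n : nat => [ffun k : 'I_5 * 'I_5 => (inord (Num.truncn ((mxpow D n k.1 k.2 + 1) / h)) : 'I_K.+1)].
have [m1 [m2 [lt12 E12]]] := pigeon F.
have bnd := fun n => isoJ_fix_bound (mxpow_iso n ID) (mxpow_fix n FD).
have close : forall i j, `|mxpow D m2 i j - mxpow D m1 i j| < h.
  move=> i j.
  have := congr1 (fun f : {ffun 'I_5 * 'I_5 -> 'I_K.+1} => f (i, j)) E12; rewrite /F !ffunE /=.
  have leK : forall n, (Num.truncn ((mxpow D n i j + 1) / h) < K.+1)%N.
    move=> n; rewrite ltnS /K; apply: le_truncn; rewrite ler_pM2r ?invr_gt0 //.
    have := bnd n i j; rewrite ler_norml => /andP[_ ?]; lra.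
  move=> /(congr1 val); rewrite /= !inordK // => E.
  have := bnd m1 i j; have := bnd m2 i j; rewrite !ler_norml => /andP[a _] /andP[b _].
  by apply: cell_close.
pose k := (m2 - m1)%N.
have kpos : (0 < k)%N by rewrite subn_gt0.
have m2E : mxpow D m2 = mxpow D k *m mxpow D m1 by rewrite -mxpowD subnK // ltnW.
pose Y := invmx (mxpow D m1).
have IY : isoJ Y by apply: isoJ_inv; apply: mxpow_iso.
have FY : Y *m e5 R = e5 R by apply: isoJ_fix_inv; [apply: mxpow_iso | apply: mxpow_fix].
have UY : mxpow D m1 \in unitmx by apply: isoJ_unit; apply: mxpow_iso.
have DkE : mxpow D k - 1%:M = (mxpow D m2 - mxpow D m1) *m Y.
  by rewrite mulmxBl m2E -mulmxA /Y mulmxV // mulmx1.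
have B1 : forall i j, `|(mxpow D k - 1%:M) i j| <= 5 * (h * 1).
  rewrite DkE; apply: mulmx_bound; last exact: isoJ_fix_bound IY FY.
  by move=> i j; rewrite !mxE; apply: ltW; apply: close.
have dkE : mxpow d k - 1%:M = g *m (mxpow D k - 1%:M) *m invmx g.
  by rewrite dE mxpow_conj // mulmxBr mulmxBl mulmx1 mulmxV.
have B2 : forall i j, `|(mxpow d k - 1%:M) i j| <= 5 * (5 * (cg * (5 * (h * 1))) * ci).
  rewrite dkE; apply: mulmx_bound; last exact: Hci.
  by apply: mulmx_bound.
have Gk : Gam (mxpow d k) by apply: group_pow.
have dk1 : mxpow d k = 1.
  apply: Heps => // i j.
  have := B2 i j; rewrite mxE [in X in X -> _]mxE => Hb.
  apply: le_lt_trans Hb _.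
  have -> : 5 * (5 * (cg * (5 * (h * 1))) * ci) = 125 * (cg * ci) * h by rewrite mulr1; ring.
  have c0 : 0 <= 125 * (cg * ci) by rewrite mulr_ge0 // mulr_ge0.
  rewrite /h (mulrA (125 * (cg * ci))) ltr_pdivrMr; last by rewrite ltr_wpDl.
  by rewrite mulrDr mulr1 [eps * _]mulrC ltrDl.
apply: (HGtf d Hd k kpos); by rewrite mxpowE.
Qed.


Lemma qnorm2_0 (R : realType) : qnorm2 (qzero R) = 0.
Proof. by rewrite /qnorm2 /= expr0n /= !addr0. Qed.

Lemma qconj_eq0 (R : realType) (c : quat R) : qconj c = qzero R -> c = qzero R.
Proof. by move=> H; rewrite -(qconjK c) H; qsolve. Qed.

Lemma SU_fix0 (R : realType) (A : hmat R) : SU11H A -> hact A (qzero R) = qzero R ->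
  exists p q, [/\ qnorm2 p = 1, qnorm2 q = 1 & A = hdiag p q].
Proof.
case: A => a b c d HA; have [Na Nd E _] := SU_parts HA.
rewrite /hact /= qmul0 qadd0r qmul0 qadd0r => Hb.
have Hd : qnorm2 d != 0 by rewrite Nd; have := qnorm2_ge0 b; lra.
have b0 : b = qzero R by rewrite -[b]qmul1 -(qmulVq Hd) qmulA Hb qmul0r.
rewrite b0 qmul0 in E.
have c0 : c = qzero R.
  apply: qconj_eq0; rewrite -[qconj c]qmul1 -(qmulqV Hd) qmulA -E qmul0r //.
exists a, d; rewrite Na Nd b0 c0 qnorm2_0 addr0; split => //.
Qed.

Lemma qconj0 (R : realType) : qconj (qzero R) = qzero R.
Proof. by rewrite /qconj /qzero /= oppr0. Qed.

Lemma SU_diag (R : realType) (p q : quat R) : qnorm2 p = 1 -> qnorm2 q = 1 -> SU11H (hdiag p q).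
Proof.
move=> Hp Hq; rewrite /SU11H /hdiag /hmul /hstar /hJ /hdiag /=.
rewrite qconj0 !qmul0 !qmul0r !qadd0 !qadd0r !qmul1r !qmul_oppl !qmul1r !qmul_oppr !qmul_conjl Hp Hq !qmul0 //.
Qed.

Lemma hact_diag0 (R : realType) (p q : quat R) : hact (hdiag p q) (qzero R) = qzero R.
Proof. by rewrite /hact /hdiag /= qmul0 qadd0r qmul0r. Qed.

Lemma trPsi1 (R : realType) (p : quat R) : \tr (Psi1 p) = ((2 * q0 p)%:C)%C.
Proof.
rewrite /mxtrace !big_ord_recr big_ord0 /= !mxE /= add0r addcJ /=.
by rewrite rmorphM rmorph_nat.
Qed.

Lemma SO_iso (R : realType) (A : 'M[R]_5) : SOp41 A -> isoJ A.
Proof. by case. Qed.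

Lemma nu_final (R : realType) (p q : quat R) (D : R) :
  D = 4 * (q0 p - q0 q) ^+ 2 ->
  ((\tr (Psi1 p) - \tr (Psi1 q)) / ((`|D|)%:C)%C) = ((1 / (2 * (qre p - qre q)))%:C)%C.
Proof.
move=> ->; rewrite !trPsi1 -rmorphB -fmorph_div; congr (_%:C)%C.
rewrite ger0_norm; last by rewrite mulr_ge0 // sqr_ge0.
rewrite /qre.
have [e|ne] := eqVneq (q0 p - q0 q) 0.
  have e' : q0 p = q0 q by apply/eqP; rewrite -subr_eq0 e.
  by rewrite e' !subrr mul0r mulr0 invr0 mulr0.
field; by rewrite ne.
Qed.

Unset Implicit Arguments.
Theorem theorem7p3 (R : realType)
  (Gam : 'M[R]_5 -> Prop) (Gamh : hmat R -> Prop)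
  (* Gamma: discrete torsion-free subgroup of SO^+(4,1), M = Gamma\H^4 closed *)
  (HGsub : is_subgroup5 Gam) (HGso : forall A, Gam A -> SOp41 A)
  (HGdisc : discrete5 Gam) (HGtf : torsion_free5 Gam) (HGcc : cocompact5 Gam)
  (* spin structure: hat Gamma in SU(1,1;H) mapped isomorphically onto Gamma by eta *)
  (HGhsub : is_subgroupH Gamh) (HGhsu : forall A, Gamh A -> SU11H A)
  (HGheta : forall A, Gamh A -> exists2 E, Gam E & eta_of A E)
  (HGhinj : forall A B E, Gamh A -> Gamh B -> eta_of A E -> eta_of B E -> A = B)
  (HGhsurj : forall E, Gam E -> exists2 A, Gamh A & eta_of A E)
  (* phi = f_star orientation-preserving isometry, hat phi = hat f_star its lift *)
  (f : 'M[R]_5) (fh : hmat R)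
  (Hf : SOp41 f) (HfN : normalizes5 f Gam)
  (Hfh : SU11H fh) (HfhN : normalizesH fh Gamh) (Hfeta : eta_of fh f)
  (* P = Gamma x, with g e5 = x and a lift hat g of g *)
  (x : 'cV[R]_5) (Hx : inH4 x)
  (g : 'M[R]_5) (gh : hmat R) (Hg : SOp41 g) (Hgx : g *m e5 R = x)
  (Hgh : SU11H gh) (Hgeta : eta_of gh g)
  (* gamma in Gamma with gamma f x = x, and its lift hat gamma in hat Gamma *)
  (gam : 'M[R]_5) (gamh : hmat R) (Hgam : Gam gam) (Hgamx : gam *m f *m x = x)
  (Hgamh : Gamh gamh) (Hgameta : eta_of gamh gam)
  (* P = Gamma x is an isolated fixed point of phi *)
  (Hiso : exists2 eps : R, 0 < eps & forall y, inH4 y ->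
           (forall i, `|y i 0 - x i 0| < eps) ->
           (exists2 d, Gam d & d *m f *m y = y) ->
           exists2 d, Gam d & d *m y = x) :
  exists p q : quat R,
    [/\ qnorm2 p = 1, qnorm2 q = 1,
        hmul (hinv gh) (hmul gamh (hmul fh gh)) = hdiag p q &
        forall s : hmat R, Spin4 s ->
          (exists2 h, Gamh h & hmul fh gh = hmul h (hmul gh s)) ->
          nu_contrib s g (gam *m f) = ((1 / (2 * (qre p - qre q)))%:C)%C].
Proof.
have [H1h [HMh HIh]] := HGhsub.
have [H1 [HM HI]] := HGsub.
have SUgam := HGhsu _ Hgamh.
have n0 : qnorm2 (qzero R) < 1 by rewrite qnorm2_0 ltr01.
have nz : qnorm2 (hact gh (qzero R)) < 1 := hact_ball Hgh n0.
have zx : zeta (hact gh (qzero R)) = x by rewrite Hgeta // zeta0 Hgx.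
have nfz := hact_ball Hfh nz.
have wz : hact gamh (hact fh (hact gh (qzero R))) = hact gh (qzero R).
  apply: zeta_inj; [exact: hact_ball | exact: nz | ].
  by rewrite Hgameta ?hact_ball // Hfeta // zx mulmxA Hgamx.
have SUih := SU_inv Hgh.
have SUfg := SU_mul Hfh Hgh.
have SUgfg := SU_mul SUgam SUfg.
have SUM : SU11H (hmul (hinv gh) (hmul gamh (hmul fh gh))) by apply: SU_mul.
have M0 : hact (hmul (hinv gh) (hmul gamh (hmul fh gh))) (qzero R) = qzero R.
  rewrite hact_comp // hact_comp // hact_comp // wz -hact_comp // hinv_l // hact_one //.
have [p [q [Hp Hq EM]]] := SU_fix0 SUM M0.
exists p, q; split => //.
move=> s [s01 [s10 [ns0 ns1]]] [h Hh Heq].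
have sE : s = hdiag (h00 s) (h11 s) by case: s s01 s10 {ns0 ns1 Heq} => ???? /= -> ->.
have SUs : SU11H s by rewrite sE; apply: SU_diag.
have SUh := HGhsu _ Hh.
have [E HE HhE] := HGheta _ Hh.
have e1 : hact fh (hact gh (qzero R)) = hact h (hact gh (qzero R)).
  have := congr1 (fun A => hact A (qzero R)) Heq => /=.
  rewrite hact_comp // hact_comp //; last exact: SU_mul.
  by rewrite hact_comp // sE hact_diag0.
have fxE : f *m x = E *m x by rewrite -zx -Hfeta // e1 HhE.
have dfix : (gam *m E) *m (g *m e5 R) = g *m e5 R by rewrite Hgx -mulmxA -fxE mulmxA.
have d1 := stab_trivial HGsub HGso HGdisc HGtf Hg (HM _ _ Hgam HE) dfix.
have Hg1 : hmul gamh h = hone R.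
  apply: (HGhinj (hmul gamh h) (hone R) 1); [exact: HMh | exact: H1h | | exact: eta_one].
  rewrite -d1; exact: eta_mul.
have sM : s = hmul (hinv gh) (hmul gamh (hmul fh gh)).
  by rewrite Heq [hmul gamh (hmul h _)]hmulA Hg1 hmul1r hmulA hinv_l // hmul1r.
rewrite sM EM.
have Ug : g \in unitmx := isoJ_unit (SO_iso Hg).
have et1 : eta_of (hmul fh gh) (f *m g) := eta_mul Hfh Hgh Hfeta Hgeta.
have et2 : eta_of (hmul gamh (hmul fh gh)) (gam *m (f *m g)) := eta_mul SUgam SUfg Hgameta et1.
have et3 : eta_of (hinv gh) (invmx g) := eta_inv Hgh Ug Hgeta.
have et4 := eta_mul SUih SUgfg et3 et2.
rewrite EM in et4.
have LdE : invmx g *m (gam *m f) *m g = Ld p q.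
  rewrite -mulmxA -mulmxA; exact: eta_unique et4 (eta_diag Hp Hq).
have IdlE : 1%:M - dphi_mx g (gam *m f) = Idl p q.
  by rewrite /dphi_mx LdE; apply/matrixP => i j; rewrite !mxE.
rewrite /nu_contrib /Delta4p /Delta4m /= IdlE det_Idl Hp Hq.
apply: nu_final; ring.
Qed.
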